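(* Let $\beta>1$ and let $t\in[0,1)\setminus\mathcal U$. Then there exists a $\beta$-rational number $r\in\mathbb Q_{(\beta)}$ such that $t\in I_r^*=(r,r^* )$. Moreover both endpoints $r$ and $r^*$ of $I_r^*$ are bifurcation parameters (that is, $r\in\mathcal U$, and $r^*\in\mathcal U$ or $r^*=1$).
   Context: Let $\gamma=\beta-1$ if $\beta$ is an integer and $\gamma=\lfloor\beta\rfloor$ otherwise. $T_\beta(x)=\beta x-\lfloor\beta x\rfloor$ on $[0,1)$. The greedy $\beta$-expansion of $x\in[0,1)$ is $b(x,\beta)=(b_i)$ with $b_i=\lfloor\beta T_\beta^{i-1}(x)\rfloor$. The quasi-greedy $\beta$-expansion $\alpha(\beta)$ of $1$ is the lexicographically largest sequence in $\{0,\dots,\gamma\}^{\mathbb N}$, not eventually zero, with $1=\sum_i\alpha(\beta)_i\beta^{-i}$. $\sigma$ is the left shift, $\prec,\preceq$ the lexicographic order, and $\pi((x_i))=\sum_i x_i\beta^{-i}$. $\Sigma_\beta=\{\omega\in\{0,\dots,\gamma\}^{\mathbb N}\colon\sigma^k(\omega)\prec\alpha(\beta)\ \forall k\ge0\}$ (the set of greedy expansions). A number $r\in(0,1)$ is $\beta$-rational if $b(r,\beta)=r_1\cdots r_m0^\infty$ with $r_m\ne0$; $\mathbb Q_{(\beta)}$ is the set of such numbers. For such $r$ define $r^*$ as follows. If the periodic sequence $(r_1\cdots r_m)^\infty\in\Sigma_\beta$, then $r^*=\pi((r_1\cdots r_m)^\infty)$. Otherwise, if $r_1=\gamma$, set $r^*=\pi(\alpha(\beta))=1$;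 if $r_1<\gamma$, start from $x^{(0)}=(r_1\cdots r_m)^\infty$ and, as long as $x^{(i)}\notin\Sigma_\beta$, let $j=\min\{k\ge0\colon\sigma^k(x^{(i)})\succeq\alpha(\beta)\}$ (one has $j\ge1$) and set $x^{(i+1)}=x^{(i)}_1\cdots x^{(i)}_{j-1}(x^{(i)}_j+1)0^\infty$; this terminates after finitely many steps at a sequence $\tilde r'\in\Sigma_\beta$, and $r^*=\pi(\tilde r')$. Put $I_r^*=(r,r^* )$. For $0<t<1$ let $K(t)=\{x\in[0,1)\colon T_\beta^k(x)\notin(0,t)\ \forall k\ge0\}$, $K(0)=[0,1)$, $K(1)=\{0\}$. A parameter $t\in[0,1]$ is a bifurcation parameter if $t\in\{0,1\}$, or $0<t<1$ and for every $\delta>0$ there is $t'\in(t-\delta,t+\delta)$ with $K(t')\ne K(t)$; $\mathcal U$ is the set of bifurcation parameters in $[0,1)$. *)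

(* Defs.v *)
From Stdlib Require Import Reals Lra Lia ZArith Arith.
From Coquelicot Require Import Coquelicot.
Open Scope R_scope.

(* Sequences are indexed from 0: w 0 is the first digit (w_1 in the paper). *)
Definition digseq := nat -> nat.

Definition flr (x : R) : Z := Int_part x.

Definition gamma (beta : R) : nat :=
  if Req_EM_T beta (IZR (flr beta)) then (Z.to_nat (flr beta) - 1)%nat
  else Z.to_nat (flr beta).

Definition Tb (beta x : R) : R := beta * x - IZR (flr (beta * x)).

Definition greedy (beta x : R) : digseq :=
  fun i => Z.to_nat (flr (beta * Nat.iter i (Tb beta) x)).

Definition piv (beta : R) (w : digseq) : R :=
  Series (fun i => INR (w i) / beta ^ (S i)).

Definition shift (k : nat) (w : digseq) : digseq := fun i => w (i + k)%nat.

Definition lex_lt (x y : digseq) : Prop :=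
  exists n, (forall k, (k < n)%nat -> x k = y k) /\ (x n < y n)%nat.
Definition lex_le (x y : digseq) : Prop := lex_lt x y \/ x = y.

(* admissible candidates for the quasi-greedy expansion of 1 *)
Definition qg_candidate (beta : R) (w : digseq) : Prop :=
  (forall i, (w i <= gamma beta)%nat) /\
  (forall N, exists n, (N <= n)%nat /\ w n <> 0%nat) /\
  is_series (fun i => INR (w i) / beta ^ (S i)) 1.

Definition is_alpha (beta : R) (a : digseq) : Prop :=
  qg_candidate beta a /\ forall w, qg_candidate beta w -> lex_le w a.

Definition Sigma (beta : R) (a : digseq) (w : digseq) : Prop :=
  (forall i, (w i <= gamma beta)%nat) /\ forall k, lex_lt (shift k w) a.

Definition brat_len (beta r : R) (m : nat) : Prop :=
  0 < r < 1 /\ (1 <= m)%nat /\ greedy beta r (m - 1)%nat <> 0%nat /\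
  forall i, (m <= i)%nat -> greedy beta r i = 0%nat.

Definition beta_rational (beta r : R) : Prop := exists m, brat_len beta r m.

(* x' = x_1 ... x_{j-1} (x_j + 1) 0^oo   (paper's 1-indexed j) *)
Definition bump (x : digseq) (j : nat) : digseq :=
  fun i => if (i <? j - 1)%nat then x i
           else if (i =? j - 1)%nat then S (x i) else 0%nat.

Definition rstep (beta : R) (a : digseq) (x x' : digseq) : Prop :=
  ~ Sigma beta a x /\
  exists j, (1 <= j)%nat /\ lex_le a (shift j x) /\
    (forall k, (k < j)%nat -> ~ lex_le a (shift k x)) /\
    x' = bump x j.

Inductive rproc (beta : R) (a : digseq) : digseq -> digseq -> Prop :=
| rproc_done x : Sigma beta a x -> rproc beta a x x
| rproc_step x x' y : rstep beta a x x' -> rproc beta a x' y -> rproc beta a x y.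

Definition is_rstar (beta : R) (a : digseq) (r s : R) : Prop :=
  exists m, brat_len beta r m /\
  let per := fun i => greedy beta r (i mod m) in
  (Sigma beta a per /\ s = piv beta per) \/
  (~ Sigma beta a per /\ greedy beta r 0%nat = gamma beta /\ s = 1) \/
  (~ Sigma beta a per /\ (greedy beta r 0%nat < gamma beta)%nat /\
     exists y, rproc beta a per y /\ s = piv beta y).

Definition Kset (beta t x : R) : Prop :=
  (t = 0 /\ 0 <= x < 1) \/
  (t = 1 /\ x = 0) \/
  (0 < t < 1 /\ 0 <= x < 1 /\
     forall k, ~ (0 < Nat.iter k (Tb beta) x < t)).

Definition bifurcation (beta t : R) : Prop :=
  t = 0 \/ t = 1 \/
  (0 < t < 1 /\ forall delta, 0 < delta ->
     exists t', 0 <= t' <= 1 /\ Rabs (t' - t) < delta /\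
       ~ (forall x, Kset beta t' x <-> Kset beta t x)).

Definition Ubif (beta t : R) : Prop := 0 <= t < 1 /\ bifurcation beta t.

(* Main.v *)
Require Import Defs.
From Stdlib Require Import Reals Lra Lia ZArith Arith Classical FunctionalExtensionality.
From Coquelicot Require Import Coquelicot.
Import Defs.
Open Scope R_scope.

Lemma IZR_small (k : Z) : -1 < IZR k < 1 -> k = 0%Z.
Proof. intros [H1 H2]. apply lt_IZR in H1. apply lt_IZR in H2. lia. Qed.

Lemma flr_unique (z : Z) (y : R) : IZR z <= y < IZR z + 1 -> flr y = z.
Proof.
  intros [H1 H2]. unfold flr. destruct (base_Int_part y) as [B1 B2].
  assert (Hk : (Int_part y - z)%Z = 0%Z).
  { apply IZR_small. rewrite minus_IZR. lra. }
  lia.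
Qed.

Lemma flr_IZR (z : Z) : flr (IZR z) = z.
Proof. apply flr_unique. lra. Qed.

Lemma flr_spec (y : R) : IZR (flr y) <= y < IZR (flr y) + 1.
Proof. unfold flr. destruct (base_Int_part y). lra. Qed.

Lemma flr_nonneg (y : R) : 0 <= y -> (0 <= flr y)%Z.
Proof.
  intros H. destruct (flr_spec y) as [_ H2].
  assert (-1 < IZR (flr y)) by lra. apply lt_IZR in H0. lia.
Qed.

Lemma Tb_range beta x : 0 <= Tb beta x < 1.
Proof. unfold Tb. destruct (flr_spec (beta * x)). lra. Qed.

Lemma Tb_eq beta x : beta * x = IZR (flr (beta * x)) + Tb beta x.
Proof. unfold Tb. ring. Qed.

Lemma Tb_0 beta : Tb beta 0 = 0.
Proof. unfold Tb. rewrite Rmult_0_r. replace 0 with (IZR 0) by reflexivity.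
  rewrite flr_IZR. simpl. ring. Qed.

Lemma iter_0 beta k : Nat.iter k (Tb beta) 0 = 0.
Proof. induction k; simpl; auto. rewrite IHk. apply Tb_0. Qed.

Lemma iter_range beta k x : 0 <= x < 1 -> 0 <= Nat.iter k (Tb beta) x < 1.
Proof. destruct k; simpl; auto. intros; apply Tb_range. Qed.

Lemma iter_zero_after beta k n x : (k <= n)%nat -> Nat.iter k (Tb beta) x = 0 ->
  Nat.iter n (Tb beta) x = 0.
Proof.
  intros Hk H. replace n with ((n - k) + k)%nat by lia.
  rewrite Nat.iter_add, H. apply iter_0.
Qed.

Lemma gamma_spec beta : 1 < beta ->
  INR (gamma beta) < beta /\ beta <= INR (gamma beta) + 1 /\
  forall n : nat, INR n < beta -> (n <= gamma beta)%nat.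
Proof.
  intros Hb. unfold gamma. destruct (flr_spec beta) as [F1 F2].
  assert (HF : (1 <= flr beta)%Z).
  { assert (0 < IZR (flr beta)) by lra. apply lt_IZR in H. lia. }
  destruct (Req_EM_T beta (IZR (flr beta))) as [E|E].
  - rewrite INR_IZR_INZ. rewrite Nat2Z.inj_sub by lia. rewrite Z2Nat.id by lia.
    simpl. rewrite minus_IZR. split; [lra|split;[lra|]].
    intros n Hn. rewrite INR_IZR_INZ in Hn. rewrite E in Hn. apply lt_IZR in Hn. lia.
  - rewrite INR_IZR_INZ. rewrite Z2Nat.id by lia. split; [lra|split;[lra|]].
    intros n Hn. rewrite INR_IZR_INZ in Hn. assert (IZR (Z.of_nat n) < IZR (flr beta + 1)).
    { rewrite plus_IZR. simpl. lra. } apply lt_IZR in H. lia.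
Qed.

Lemma digit_val beta y : 0 <= beta -> 0 <= y -> INR (Z.to_nat (flr (beta * y))) = IZR (flr (beta * y)).
Proof. intros Hb H. rewrite INR_IZR_INZ, Z2Nat.id; auto. apply flr_nonneg. apply Rmult_le_pos; auto. Qed.
Lemma Rinv_lt_1 b : 1 < b -> / b < 1.
Proof. intros H. apply (Rmult_lt_reg_l b); [lra|]. rewrite Rinv_r by lra. lra. Qed.

Definition bnd (B : nat) (w : digseq) := forall i, (w i <= B)%nat.

Lemma pow_pos' beta n : 1 < beta -> 0 < beta ^ n.
Proof. intros; apply pow_lt; lra. Qed.

Lemma pi_ex beta B w : 1 < beta -> bnd B w ->
  ex_series (fun i => INR (w i) / beta ^ S i).
Proof.
  intros Hb Hw.
  apply (@ex_series_le R_AbsRing R_CompleteNormedModule _ (fun n => INR B * (/ beta) ^ n)).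
  - intros n. unfold norm; simpl. rewrite Rabs_pos_eq.
    + rewrite pow_inv. unfold Rdiv. simpl.
      assert (0 < beta ^ n) by (apply pow_pos'; auto).
      assert (INR (w n) <= INR B) by (apply le_INR; auto).
      assert (0 <= INR (w n)) by apply pos_INR.
      rewrite Rinv_mult.
      assert (0 < / beta ^ n) by (apply Rinv_0_lt_compat; auto).
      assert (/ beta < 1) by (apply Rinv_lt_1; lra).
      assert (0 < / beta) by (apply Rinv_0_lt_compat; lra).
      assert (INR (w n) * (/ beta * / beta ^ n) <= INR (w n) * / beta ^ n).
      { apply Rmult_le_compat_l; auto. rewrite <- (Rmult_1_l (/ beta ^ n)) at 2.
        apply Rmult_le_compat_r; lra. }
      assert (INR (w n) * / beta ^ n <= INR B * / beta ^ n).
      { apply Rmult_le_compat_r; lra. }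
      lra.
    + apply Rmult_le_pos; [apply pos_INR|]. left; apply Rinv_0_lt_compat; apply (pow_pos' beta (S n)); auto.
  - apply (ex_series_scal_l (V := R_NormedModule)). apply ex_series_geom.
    rewrite Rabs_pos_eq. apply Rinv_lt_1; lra. left; apply Rinv_0_lt_compat; lra.
Qed.

Lemma shift_shift n k w : shift n (shift k w) = shift (n + k) w.
Proof. apply functional_extensionality; intro i. unfold shift. f_equal. lia. Qed.

Lemma shift_0 w : shift 0 w = w.
Proof. apply functional_extensionality; intro i. unfold shift. f_equal. lia. Qed.

Lemma bnd_shift B k w : bnd B w -> bnd B (shift k w).
Proof. intros H i. apply H. Qed.

Lemma pi_step beta B w : 1 < beta -> bnd B w ->
  piv beta w = (INR (w 0%nat) + piv beta (shift 1 w)) / beta.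
Proof.
  intros Hb Hw. unfold piv. rewrite Series_incr_1 by (eapply pi_ex; eauto).
  assert (Series (fun k => INR (w (S k)) / beta ^ S (S k)) =
          / beta * Series (fun i => INR (shift 1 w i) / beta ^ S i)).
  { rewrite <- Series_scal_l. apply Series_ext. intros n. unfold shift.
    replace (n + 1)%nat with (S n) by lia. simpl. field.
    split; [apply Rgt_not_eq, pow_pos'; auto | lra]. }
  rewrite H. simpl. field. lra.
Qed.

Lemma pi_nonneg beta B w : 1 < beta -> bnd B w -> 0 <= piv beta w.
Proof.
  intros Hb Hw. unfold piv.
  assert (Series (fun _ : nat => 0) = 0).
  { rewrite (Series_ext _ (fun n => 0 * 1)). rewrite Series_scal_l. ring. intros; ring. }
  rewrite <- H. apply Series_le.
  - intros n. split; [lra|]. apply Rmult_le_pos; [apply pos_INR|].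
    left; apply Rinv_0_lt_compat, pow_pos'; auto.
  - eapply pi_ex; eauto.
Qed.

Lemma pi_bound beta B w : 1 < beta -> bnd B w -> piv beta w <= piv beta (fun _ => B).
Proof.
  intros Hb Hw. unfold piv. apply Series_le.
  - intros n. split. apply Rmult_le_pos; [apply pos_INR|].
    left; apply Rinv_0_lt_compat, pow_pos'; auto.
    apply Rmult_le_compat_r. left; apply Rinv_0_lt_compat, pow_pos'; auto.
    apply le_INR; auto.
  - apply (pi_ex _ B); auto. intro; auto.
Qed.

Lemma small_pow beta : 1 < beta -> forall eps, 0 < eps -> exists N, / beta ^ N < eps.
Proof.
  intros Hb eps He. destruct (pow_lt_1_zero (/ beta)) with (y := eps) as [N HN]; auto.
  rewrite Rabs_pos_eq. apply Rinv_lt_1; lra. left; apply Rinv_0_lt_compat; lra.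
  exists N. specialize (HN N (le_n _)). rewrite Rabs_pos_eq in HN.
  rewrite <- pow_inv; auto. apply pow_le. left; apply Rinv_0_lt_compat; lra.
Qed.

Lemma zero_of_small beta D K : 1 < beta -> (forall N, Rabs D <= K / beta ^ N) -> D = 0.
Proof.
  intros Hb H. destruct (Req_dec D 0) as [E|E]; auto. exfalso.
  assert (HD : 0 < Rabs D) by (apply Rabs_pos_lt; auto).
  assert (HK : 0 < K).
  { specialize (H 0%nat). simpl in H. lra. }
  destruct (small_pow beta Hb (Rabs D / K)) as [N HN].
  { apply Rdiv_lt_0_compat; auto. }
  specialize (H N). assert (0 < beta ^ N) by (apply pow_pos'; auto).
  unfold Rdiv in *. 
  assert (K * / beta ^ N < K * (Rabs D * / K)) by (apply Rmult_lt_compat_l; auto).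
  replace (K * (Rabs D * / K)) with (Rabs D) in H1 by (field; lra). lra.
Qed.

Lemma pi_prefix beta B n : 1 < beta -> forall u v, bnd B u -> bnd B v ->
  (forall i, (i < n)%nat -> u i = v i) ->
  piv beta u - piv beta v = (piv beta (shift n u) - piv beta (shift n v)) / beta ^ n.
Proof.
  intros Hb. induction n; intros u v Hu Hv Heq.
  - rewrite !shift_0. simpl. field.
  - rewrite (pi_step beta B u), (pi_step beta B v); auto.
    rewrite (Heq 0%nat) by lia.
    assert (E := IHn (shift 1 u) (shift 1 v)).
    rewrite !shift_shift in E. replace (n + 1)%nat with (S n) in E by lia.
    assert (E' : piv beta (shift 1 u) - piv beta (shift 1 v) =
      (piv beta (shift (S n) u) - piv beta (shift (S n) v)) / beta ^ n).
    { apply E; try (apply bnd_shift; auto). intros i Hi. unfold shift. apply Heq. lia. }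
    assert (0 < beta ^ n) by (apply pow_pos'; auto).
    transitivity ((piv beta (shift 1 u) - piv beta (shift 1 v)) / beta).
    { field. lra. }
    rewrite E'. simpl. field. split; lra.
Qed.

Lemma pi_pos beta B : 1 < beta -> forall i w, bnd B w -> w i <> 0%nat -> 0 < piv beta w.
Proof.
  intros Hb. induction i; intros w Hw Hi.
  - rewrite (pi_step beta B w); auto.
    assert (0 <= piv beta (shift 1 w)) by (apply (pi_nonneg beta B); auto; apply bnd_shift; auto).
    assert (0 < INR (w 0%nat)) by (apply lt_0_INR; lia).
    apply Rdiv_lt_0_compat; lra.
  - rewrite (pi_step beta B w); auto.
    assert (0 < piv beta (shift 1 w)).
    { apply (IHi (shift 1 w)). apply bnd_shift; auto. unfold shift. replace (i+1)%nat with (S i) by lia. auto. }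
    assert (0 <= INR (w 0%nat)) by apply pos_INR.
    apply Rdiv_lt_0_compat; lra.
Qed.

Lemma pi_expansion beta B (rho : nat -> R) w : 1 < beta -> bnd B w ->
  (forall n, 0 <= rho n <= 1) ->
  (forall n, beta * rho n = INR (w n) + rho (S n)) ->
  forall n, piv beta (shift n w) = rho n.
Proof.
  intros Hb Hw Hr Hs n.
  set (C := piv beta (fun _ => B)).
  assert (HC : forall k, 0 <= piv beta (shift k w) <= C).
  { intros k. split. apply (pi_nonneg beta B); auto; apply bnd_shift; auto.
    apply pi_bound; auto; apply bnd_shift; auto. }
  assert (Hstep : forall k, piv beta (shift (k + n) w) - rho (k + n)%nat =
     (piv beta (shift (S k + n) w) - rho (S k + n)%nat) / beta).
  { intros k. rewrite (pi_step beta B (shift (k + n) w)) by (auto; apply bnd_shift; auto).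
    rewrite shift_shift. change (shift (k + n) w 0%nat) with (w (0 + (k + n))%nat).
    replace (1 + (k + n))%nat with (S (k + n)) by lia. simpl (0 + (k + n))%nat.
    simpl (S k + n)%nat.
    assert (E := Hs (k + n)%nat).
    replace (rho (k + n)%nat) with ((INR (w (k + n)%nat) + rho (S (k + n))) / beta)
      by (apply (Rmult_eq_reg_l beta); [rewrite E; field|]; lra).
    field. lra. }
  assert (Hall : forall k, piv beta (shift n w) - rho n =
     (piv beta (shift (k + n) w) - rho (k + n)%nat) / beta ^ k).
  { induction k. simpl. field. rewrite IHk, Hstep. simpl. field.
    split; [apply Rgt_not_eq, pow_pos'; auto | lra]. }
  assert (D0 : piv beta (shift n w) - rho n = 0).
  { apply (zero_of_small beta _ (C + 1)); auto. intros N. rewrite (Hall N).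
    unfold Rdiv. rewrite Rabs_mult. rewrite (Rabs_pos_eq (/ _)).
    2: left; apply Rinv_0_lt_compat, pow_pos'; auto.
    apply Rmult_le_compat_r. left; apply Rinv_0_lt_compat, pow_pos'; auto.
    specialize (HC (N + n)%nat). specialize (Hr (N + n)%nat).
    apply Rabs_le. lra. }
  lra.
Qed.

Lemma lex_pi beta B w w' n : 1 < beta -> bnd B w -> bnd B w' ->
  (forall i, (i < n)%nat -> w i = w' i) -> (w n < w' n)%nat ->
  piv beta (shift (S n) w) < 1 -> piv beta w < piv beta w'.
Proof.
  intros Hb Hw Hw' Heq Hlt H1.
  assert (P := pi_prefix beta B n Hb w w' Hw Hw' Heq).
  rewrite (pi_step beta B (shift n w)) in P by (auto; apply bnd_shift; auto).
  rewrite (pi_step beta B (shift n w')) in P by (auto; apply bnd_shift; auto).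
  rewrite !shift_shift in P. unfold shift at 1 3 in P. simpl in P.
  replace (1 + n)%nat with (S n) in P by lia.
  assert (0 <= piv beta (shift (S n) w')) by (apply (pi_nonneg beta B); auto; apply bnd_shift; auto).
  assert (INR (w n) + 1 <= INR (w' n)).
  { rewrite <- S_INR. apply le_INR. lia. }
  assert (Hp : 0 < beta ^ n) by (apply pow_pos'; auto).
  assert (X : (INR (w n) + piv beta (shift (S n) w)) / beta -
    (INR (w' n) + piv beta (shift (S n) w')) / beta < 0).
  { unfold Rdiv. rewrite <- Rmult_minus_distr_r. apply Rmult_neg_pos; [lra|].
    apply Rinv_0_lt_compat; lra. }
  assert (Y : ((INR (w n) + piv beta (shift (S n) w)) / beta -
    (INR (w' n) + piv beta (shift (S n) w')) / beta) / beta ^ n < 0).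
  { unfold Rdiv at 3. apply Rmult_neg_pos; auto. apply Rinv_0_lt_compat; auto. }
  lra.
Qed.

Lemma exists_min (P : nat -> Prop) : (exists n, P n) -> exists n, P n /\ forall k, (k < n)%nat -> ~ P k.
Proof.
  intros [n Hn]. revert Hn. induction n as [n IH] using (well_founded_induction lt_wf).
  intros Hn. destruct (classic (exists k, (k < n)%nat /\ P k)) as [[k [Hk Pk]]|N].
  - apply (IH k Hk Pk).
  - exists n. split; auto. intros k Hk Pk. apply N. eauto.
Qed.

Lemma lex_lt_irrefl x : ~ lex_lt x x.
Proof. intros [n [_ H]]. lia. Qed.

Lemma lex_lt_trans x y z : lex_lt x y -> lex_lt y z -> lex_lt x z.
Proof.
  intros [n [Hn Ln]] [m [Hm Lm]].
  destruct (lt_eq_lt_dec n m) as [[H|H]|H].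
  - exists n. split. intros k Hk. rewrite Hn by lia. apply Hm. lia. rewrite <- (Hm n) by lia. auto.
  - subst. exists m. split. intros k Hk. rewrite Hn by lia. apply Hm. lia. lia.
  - exists m. split. intros k Hk. rewrite Hn by lia. apply Hm. lia. rewrite (Hn m) by lia. auto.
Qed.

Lemma lex_le_lt_trans x y z : lex_le x y -> lex_lt y z -> lex_lt x z.
Proof. intros [H|H] H'. eapply lex_lt_trans; eauto. subst; auto. Qed.

Lemma lex_lt_le_trans x y z : lex_lt x y -> lex_le y z -> lex_lt x z.
Proof. intros H [H'|H']. eapply lex_lt_trans; eauto. subst; auto. Qed.

Lemma lex_lt_not_le x y : lex_lt x y -> ~ lex_le y x.
Proof. intros H H'. apply (lex_lt_irrefl x). eapply lex_lt_le_trans; eauto. Qed.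

Lemma lex_total x y : lex_lt x y \/ x = y \/ lex_lt y x.
Proof.
  destruct (classic (exists n, x n <> y n)) as [E|E].
  - destruct (exists_min _ E) as [n [Hn Hmin]].
    assert (Heq : forall k, (k < n)%nat -> x k = y k).
    { intros k Hk. apply NNPP. intro. apply (Hmin k Hk). auto. }
    destruct (lt_eq_lt_dec (x n) (y n)) as [[H|H]|H].
    + left. exists n. auto.
    + contradiction.
    + right; right. exists n. split; auto. intros k Hk. symmetry; auto.
  - right; left. apply functional_extensionality. intros n. apply NNPP. intro. apply E. eauto.
Qed.

Lemma not_le_lt x y : ~ lex_le y x -> lex_lt x y.
Proof.
  intros H. destruct (lex_total x y) as [H1|[H1|H1]]; auto.
  - exfalso. apply H. right. auto.
  - exfalso. apply H. left. auto.
Qed.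

Lemma not_lt_le x y : ~ lex_lt x y -> lex_le y x.
Proof.
  intros H. destruct (lex_total x y) as [H1|[H1|H1]]; [contradiction| right; auto | left; auto].
Qed.

Lemma not_le_zero a w : (exists i, a i <> 0%nat) -> (forall i, w i = 0%nat) -> ~ lex_le a w.
Proof.
  intros [i Hi] Hw [[n [_ Hn]]|E].
  - rewrite Hw in Hn. lia.
  - subst. apply Hi. auto.
Qed.

Lemma greedy_shift beta k x : shift k (greedy beta x) = greedy beta (Nat.iter k (Tb beta) x).
Proof.
  apply functional_extensionality. intros i. unfold shift, greedy. rewrite Nat.iter_add. auto.
Qed.

Lemma digit_le_gamma beta y : 1 < beta -> 0 <= y < 1 -> (Z.to_nat (flr (beta * y)) <= gamma beta)%nat.
Proof.
  intros Hb Hy. destruct (gamma_spec beta Hb) as [_ [_ G]]. apply G.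
  rewrite digit_val by lra. destruct (flr_spec (beta * y)).
  assert (beta * y < beta * 1) by (apply Rmult_lt_compat_l; lra). lra.
Qed.

Lemma greedy_bnd beta x : 1 < beta -> 0 <= x < 1 -> bnd (gamma beta) (greedy beta x).
Proof.
  intros Hb Hx i. unfold greedy. apply digit_le_gamma; auto. apply iter_range; auto.
Qed.

Lemma pi_greedy beta x : 1 < beta -> 0 <= x < 1 ->
  forall n, piv beta (shift n (greedy beta x)) = Nat.iter n (Tb beta) x.
Proof.
  intros Hb Hx. apply (pi_expansion beta (gamma beta)); auto.
  - apply greedy_bnd; auto.
  - intros n. destruct (iter_range beta n x Hx). lra.
  - intros n. unfold greedy. rewrite digit_val by (try lra; apply iter_range; auto).
    simpl. apply Tb_eq.
Qed.

Lemma pi_greedy0 beta x : 1 < beta -> 0 <= x < 1 -> piv beta (greedy beta x) = x.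
Proof. intros. rewrite <- (shift_0 (greedy beta x)). apply pi_greedy; auto. Qed.

Lemma greedy_lex beta x y : 1 < beta -> 0 <= x < 1 -> 0 <= y < 1 ->
  lex_lt (greedy beta x) (greedy beta y) -> x < y.
Proof.
  intros Hb Hx Hy [n [Hn Ln]].
  rewrite <- (pi_greedy0 beta x), <- (pi_greedy0 beta y) by auto.
  apply (lex_pi beta (gamma beta) _ _ n); auto; try apply greedy_bnd; auto.
  rewrite pi_greedy by auto. apply iter_range; auto.
Qed.

Lemma Series_zero : Series (fun _ : nat => 0) = 0.
Proof. rewrite (Series_ext _ (fun n => 0 * 1)). rewrite Series_scal_l. ring. intros; ring. Qed.

Lemma pi_zero beta w : (forall i, w i = 0%nat) -> piv beta w = 0.
Proof.
  intros H. unfold piv. rewrite <- Series_zero. apply Series_ext. intros n. rewrite H. simpl. unfold Rdiv. ring.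
Qed.

Lemma alpha_facts beta a : is_alpha beta a ->
  bnd (gamma beta) a /\ (forall N, exists n, (N <= n)%nat /\ a n <> 0%nat) /\ piv beta a = 1.
Proof.
  intros [[H1 [H2 H3]] _]. split; auto. split; auto. unfold piv. apply is_series_unique. auto.
Qed.

Lemma Sigma_shift beta a w k : Sigma beta a w -> Sigma beta a (shift k w).
Proof.
  intros [H1 H2]. split. intros i; apply H1. intros j. rewrite shift_shift. apply H2.
Qed.

Lemma pow_ge_beta beta n : 1 < beta -> beta <= beta ^ S n.
Proof.
  intros Hb. simpl. assert (1 <= beta ^ n) by (apply pow_R1_Rle; lra).
  rewrite <- (Rmult_1_r beta) at 1. apply Rmult_le_compat_l; lra.
Qed.

Lemma parry_key beta a w M : 1 < beta -> is_alpha beta a -> Sigma beta a w ->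
  (forall j, piv beta (shift j w) <= M) ->
  forall k, exists n P, 0 < P /\ piv beta (shift k w) <= 1 + (M - 1 - P) / beta ^ S n.
Proof.
  intros Hb Ha Hw HM k.
  destruct (alpha_facts beta a Ha) as [Ab [Anz A1]].
  destruct Hw as [Wb Wl].
  destruct (Wl k) as [n [Hn Ln]].
  exists n, (piv beta (shift (S n) a)).
  split.
  { destruct (Anz (S n)) as [m [Hm Am]].
    apply (pi_pos beta (gamma beta) Hb (m - S n)). apply bnd_shift; auto.
    unfold shift. replace (m - S n + S n)%nat with m by lia. auto. }
  assert (P := pi_prefix beta (gamma beta) n Hb (shift k w) a (bnd_shift _ _ _ Wb) Ab Hn).
  rewrite A1 in P.
  rewrite (pi_step beta (gamma beta) (shift n (shift k w))) in P by (auto; repeat apply bnd_shift; auto).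
  rewrite (pi_step beta (gamma beta) (shift n a)) in P by (auto; repeat apply bnd_shift; auto).
  rewrite !shift_shift in P.
  change (shift (n + k) w 0%nat) with (w (0 + (n + k))%nat) in P.
  change (shift n a 0%nat) with (a (0 + n)%nat) in P. simpl (0 + _)%nat in P.
  replace (1 + (n + k))%nat with (S n + k)%nat in P by lia.
  replace (1 + n)%nat with (S n) in P by lia.
  assert (INR (w (n + k)%nat) + 1 <= INR (a n)).
  { rewrite <- S_INR. apply le_INR. unfold shift in Ln. replace (n+k)%nat with (n+k)%nat by lia. lia. }
  specialize (HM (S n + k)%nat).
  assert (Hp : 0 < beta ^ n) by (apply pow_pos'; auto).
  assert (piv beta (shift k w) - 1 <= (M - 1 - piv beta (shift (S n) a)) / beta ^ S n).
  { rewrite P.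
    set (X := INR (w (n + k)%nat) + piv beta (shift (S n + k) w)).
    set (Y := INR (a n) + piv beta (shift (S n) a)).
    replace ((X / beta - Y / beta) / beta ^ n) with ((X - Y) / beta ^ S n)
      by (simpl; field; split; lra).
    unfold Rdiv. apply Rmult_le_compat_r.
    left; apply Rinv_0_lt_compat; apply pow_pos'; auto.
    unfold X, Y. lra. }
  lra.
Qed.

Lemma parry beta a w : 1 < beta -> is_alpha beta a -> Sigma beta a w ->
  forall k, piv beta (shift k w) < 1.
Proof.
  intros Hb Ha Hw.
  set (SS := fun y => exists k, y = piv beta (shift k w)).
  assert (Hbd : bound SS).
  { exists (piv beta (fun _ => gamma beta)). intros y [k ->]. apply pi_bound; auto.
    apply bnd_shift. destruct Hw as [Hw1 _]. exact Hw1. }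
  destruct (completeness SS Hbd) as [M [HMu HMl]].
  { exists (piv beta (shift 0 w)). exists 0%nat. auto. }
  assert (HM : forall j, piv beta (shift j w) <= M).
  { intros j. apply HMu. exists j; auto. }
  assert (M1 : M <= 1).
  { destruct (Rle_dec M 1) as [|N]; auto. exfalso.
    assert (U : is_upper_bound SS (1 + (M - 1) / beta)).
    { intros y [k ->]. destruct (parry_key beta a w M Hb Ha Hw HM k) as [n [P [HP Hk]]].
      assert (beta <= beta ^ S n) by (apply pow_ge_beta; auto).
      assert ((M - 1 - P) / beta ^ S n <= (M - 1) / beta ^ S n).
      { unfold Rdiv. apply Rmult_le_compat_r. left; apply Rinv_0_lt_compat; lra. lra. }
      assert ((M - 1) / beta ^ S n <= (M - 1) / beta).
      { unfold Rdiv. apply Rmult_le_compat_l. lra. apply Rinv_le_contravar; lra. }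
      lra. }
    specialize (HMl _ U).
    assert ((M - 1) / beta < M - 1).
    { apply (Rmult_lt_reg_l beta); [lra|]. field_simplify; nra. }
    lra. }
  intros k. destruct (parry_key beta a w M Hb Ha Hw HM k) as [n [P [HP Hk]]].
  assert (0 < beta ^ S n) by (apply pow_pos'; auto).
  assert ((M - 1 - P) / beta ^ S n < 0).
  { unfold Rdiv. apply Rmult_neg_pos. lra. apply Rinv_0_lt_compat; auto. }
  lra.
Qed.

Lemma sigma_T beta a w : 1 < beta -> is_alpha beta a -> Sigma beta a w ->
  forall k, Nat.iter k (Tb beta) (piv beta w) = piv beta (shift k w).
Proof.
  intros Hb Ha Hw k. induction k.
  - simpl. rewrite shift_0. auto.
  - simpl. rewrite IHk.
    set (u := shift k w).
    assert (Hu : Sigma beta a u) by (apply Sigma_shift; auto).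
    assert (E := pi_step beta (gamma beta) u Hb (proj1 Hu)).
    assert (L := parry beta a u Hb Ha Hu 1).
    assert (N := pi_nonneg beta (gamma beta) (shift 1 u) Hb (bnd_shift _ _ _ (proj1 Hu))).
    assert (F : flr (beta * piv beta u) = Z.of_nat (u 0%nat)).
    { apply flr_unique. rewrite <- INR_IZR_INZ.
      replace (beta * piv beta u) with (INR (u 0%nat) + piv beta (shift 1 u)) by (rewrite E; field; lra).
      lra. }
    unfold Tb. rewrite F. rewrite <- INR_IZR_INZ.
    replace (beta * piv beta u) with (INR (u 0%nat) + piv beta (shift 1 u)) by (rewrite E; field; lra).
    unfold u. rewrite shift_shift. replace (1 + k)%nat with (S k) by lia. ring.
Qed.

Lemma sigma_lex beta a w w' : 1 < beta -> is_alpha beta a -> Sigma beta a w ->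
  bnd (gamma beta) w' -> lex_lt w w' -> piv beta w < piv beta w'.
Proof.
  intros Hb Ha Hw Hw' [n [Hn Ln]].
  apply (lex_pi beta (gamma beta) w w' n); auto. exact (proj1 Hw). apply parry with a; auto.
Qed.

Definition Eset beta x := 0 < x < 1 /\ forall k, ~ (0 < Nat.iter k (Tb beta) x < x).

Definition Lyn (x : digseq) := forall k, lex_le x (shift k x) \/ (forall i, x (i + k)%nat = 0%nat).

Lemma E_of_Lyn beta a y : 1 < beta -> is_alpha beta a -> Sigma beta a y -> Lyn y ->
  (exists i, y i <> 0%nat) -> Eset beta (piv beta y).
Proof.
  intros Hb Ha Hy HL [i Hi].
  split. split.
  - apply (pi_pos beta (gamma beta) Hb i); auto. exact (proj1 Hy).
  - assert (Q := parry beta a y Hb Ha Hy 0). rewrite shift_0 in Q. exact Q.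
  - intros k. rewrite (sigma_T beta a y) by auto. destruct (HL k) as [[H|H]|H].
    + assert (piv beta y < piv beta (shift k y)).
      { apply sigma_lex with a; auto. apply bnd_shift; exact (proj1 Hy). }
      lra.
    + rewrite <- H. lra.
    + rewrite pi_zero. lra. intros j. apply H.
Qed.

Definition dceil (z : R) : Z := (- up (- z))%Z.

Lemma dceil_spec z : IZR (dceil z) < z <= IZR (dceil z) + 1.
Proof. unfold dceil. rewrite opp_IZR. destruct (archimed (- z)). lra. Qed.

Lemma dceil_unique z d : IZR d < z <= IZR d + 1 -> dceil z = d.
Proof.
  intros H. destruct (dceil_spec z).
  assert (Hk : (dceil z - d)%Z = 0%Z). { apply IZR_small. rewrite minus_IZR. lra. }
  lia.
Qed.

Lemma dceil_mono z1 z2 : z1 <= z2 -> (dceil z1 <= dceil z2)%Z.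
Proof.
  intros H. destruct (dceil_spec z1), (dceil_spec z2).
  assert (IZR (dceil z1) < IZR (dceil z2 + 1)) by (rewrite plus_IZR; simpl; lra).
  apply lt_IZR in H4. lia.
Qed.

Lemma dceil_nonneg z : 0 < z -> (0 <= dceil z)%Z.
Proof.
  intros H. destruct (dceil_spec z). assert (-1 < IZR (dceil z)) by lra. apply lt_IZR in H2. lia.
Qed.

Fixpoint qrem (beta x : R) (n : nat) : R :=
  match n with
  | O => x
  | S n => beta * qrem beta x n - IZR (dceil (beta * qrem beta x n))
  end.

Definition qg (beta x : R) : digseq := fun n => Z.to_nat (dceil (beta * qrem beta x n)).

Lemma qrem_range beta x : 1 < beta -> 0 < x <= 1 -> forall n, 0 < qrem beta x n <= 1.
Proof.
  intros Hb Hx n. induction n; simpl; auto.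
  destruct (dceil_spec (beta * qrem beta x n)). lra.
Qed.

Lemma qg_val beta x n : 1 < beta -> 0 < x <= 1 ->
  INR (qg beta x n) = IZR (dceil (beta * qrem beta x n)).
Proof.
  intros Hb Hx. unfold qg. rewrite INR_IZR_INZ, Z2Nat.id; auto.
  apply dceil_nonneg. destruct (qrem_range beta x Hb Hx n). nra.
Qed.

Lemma qg_step beta x n : 1 < beta -> 0 < x <= 1 ->
  beta * qrem beta x n = INR (qg beta x n) + qrem beta x (S n).
Proof. intros Hb Hx. rewrite qg_val by auto. simpl. ring. Qed.

Lemma qg_bnd beta x : 1 < beta -> 0 < x <= 1 -> bnd (gamma beta) (qg beta x).
Proof.
  intros Hb Hx n. destruct (gamma_spec beta Hb) as [_ [_ G]]. apply G.
  rewrite qg_val by auto. destruct (dceil_spec (beta * qrem beta x n)).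
  destruct (qrem_range beta x Hb Hx n).
  assert (beta * qrem beta x n <= beta * 1) by (apply Rmult_le_compat_l; lra). lra.
Qed.

Lemma pi_qg beta x : 1 < beta -> 0 < x <= 1 ->
  forall n, piv beta (shift n (qg beta x)) = qrem beta x n.
Proof.
  intros Hb Hx. apply (pi_expansion beta (gamma beta)); auto.
  - apply qg_bnd; auto.
  - intros n. destruct (qrem_range beta x Hb Hx n). lra.
  - intros n. apply qg_step; auto.
Qed.

Lemma qrem_shift beta x k : forall n, qrem beta (qrem beta x k) n = qrem beta x (n + k).
Proof. induction n; simpl; auto. rewrite IHn. auto. Qed.

Lemma qg_shift beta x k : shift k (qg beta x) = qg beta (qrem beta x k).
Proof.
  apply functional_extensionality. intros i. unfold shift, qg. rewrite qrem_shift. auto.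
Qed.

Lemma qg_nz beta x : 1 < beta -> 0 < x <= 1 ->
  forall N, exists n, (N <= n)%nat /\ qg beta x n <> 0%nat.
Proof.
  intros Hb Hx N. apply NNPP. intros C.
  assert (Z : forall n, (N <= n)%nat -> qg beta x n = 0%nat).
  { intros n Hn. apply NNPP. intro. apply C. eauto. }
  assert (G : forall k, qrem beta x (k + N) = beta ^ k * qrem beta x N).
  { induction k. simpl. ring. simpl (S k + N)%nat.
    assert (E := qg_step beta x (k + N) Hb Hx). rewrite Z in E by lia. simpl in E.
    simpl. simpl in E. rewrite IHk in *. rewrite <- Rmult_assoc in *. lra. }
  destruct (qrem_range beta x Hb Hx N) as [P1 _].
  destruct (small_pow beta Hb (qrem beta x N) P1) as [k Hk].
  destruct (qrem_range beta x Hb Hx (k + N)) as [_ Q]. rewrite G in Q.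
  assert (0 < beta ^ k) by (apply pow_pos'; auto).
  assert (/ beta ^ k * (beta ^ k * qrem beta x N) <= / beta ^ k * 1).
  { apply Rmult_le_compat_l; auto. left; apply Rinv_0_lt_compat; auto. }
  replace (/ beta ^ k * (beta ^ k * qrem beta x N)) with (qrem beta x N) in H0 by (field; lra).
  lra.
Qed.

Lemma qg_candidate1 beta : 1 < beta -> qg_candidate beta (qg beta 1).
Proof.
  intros Hb. assert (H1 : 0 < 1 <= 1) by lra. split; [|split].
  - apply qg_bnd; auto.
  - apply qg_nz; auto.
  - assert (E := pi_qg beta 1 Hb H1 0). rewrite shift_0 in E. simpl in E.
    unfold piv in E.
    assert (X := Series_correct _ (pi_ex beta (gamma beta) (qg beta 1) Hb (qg_bnd beta 1 Hb H1))).
    rewrite E in X. exact X.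
Qed.

Lemma qg_max beta w : 1 < beta -> qg_candidate beta w -> ~ lex_lt (qg beta 1) w.
Proof.
  intros Hb [Wb [Wnz Ws]] [n [Hn Ln]].
  assert (H1 : 0 < 1 <= 1) by lra.
  assert (Pw : piv beta w = 1) by (unfold piv; apply is_series_unique; auto).
  assert (Pq : piv beta (qg beta 1) = 1).
  { assert (E := pi_qg beta 1 Hb H1 0). rewrite shift_0 in E. auto. }
  assert (P := pi_prefix beta (gamma beta) n Hb (qg beta 1) w (qg_bnd beta 1 Hb H1) Wb Hn).
  rewrite Pw, Pq, pi_qg in P by auto.
  assert (0 < beta ^ n) by (apply pow_pos'; auto).
  assert (E1 : piv beta (shift n w) = qrem beta 1 n).
  { assert (Z0 : (qrem beta 1 n - piv beta (shift n w)) / beta ^ n = 0) by lra.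
    assert (H2 : qrem beta 1 n - piv beta (shift n w) = ((qrem beta 1 n - piv beta (shift n w)) / beta ^ n) * beta ^ n)
      by (field; lra).
    rewrite Z0 in H2. lra. }
  rewrite (pi_step beta (gamma beta) (shift n w)) in E1 by (auto; apply bnd_shift; auto).
  rewrite shift_shift in E1. change (shift n w 0%nat) with (w (0 + n)%nat) in E1.
  simpl (0 + n)%nat in E1. replace (1 + n)%nat with (S n) in E1 by lia.
  assert (Pos : 0 < piv beta (shift (S n) w)).
  { destruct (Wnz (S n)) as [m [Hm Am]].
    apply (pi_pos beta (gamma beta) Hb (m - S n)). apply bnd_shift; auto.
    unfold shift. replace (m - S n + S n)%nat with m by lia. auto. }
  assert (INR (qg beta 1 n) + 1 <= INR (w n)) by (rewrite <- S_INR; apply le_INR; lia).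
  rewrite qg_val in H0 by auto.
  destruct (dceil_spec (beta * qrem beta 1 n)).
  assert (beta * qrem beta 1 n = INR (w n) + piv beta (shift (S n) w)) by (rewrite <- E1; field; lra).
  lra.
Qed.

Lemma alpha_qg beta a : 1 < beta -> is_alpha beta a -> a = qg beta 1.
Proof.
  intros Hb [Ha Hmax]. destruct (Hmax _ (qg_candidate1 beta Hb)) as [L|E]; auto.
  exfalso. apply (qg_max beta a Hb Ha L).
Qed.

Lemma qg_mono beta x y : 1 < beta -> 0 < y <= x -> x <= 1 -> ~ lex_lt (qg beta x) (qg beta y).
Proof.
  intros Hb Hy Hx [p [Hp Lp]].
  assert (Hxr : 0 < x <= 1) by lra. assert (Hyr : 0 < y <= 1) by lra.
  assert (R : forall i, (i <= p)%nat -> qrem beta y i <= qrem beta x i).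
  { induction i; intros Hi; simpl; [lra|].
    assert (E := Hp i ltac:(lia)). unfold qg in E.
    assert (Dx := dceil_nonneg (beta * qrem beta x i)).
    assert (Dy := dceil_nonneg (beta * qrem beta y i)).
    destruct (qrem_range beta x Hb Hxr i), (qrem_range beta y Hb Hyr i).
    assert (dceil (beta * qrem beta x i) = dceil (beta * qrem beta y i)).
    { apply Z2Nat.inj; auto; [apply Dx|apply Dy]; nra. }
    rewrite H3. specialize (IHi ltac:(lia)). nra. }
  specialize (R p (le_n _)).
  assert (M := dceil_mono (beta * qrem beta y p) (beta * qrem beta x p)).
  unfold qg in Lp.
  assert ((dceil (beta * qrem beta y p) <= dceil (beta * qrem beta x p))%Z) by (apply M; nra).
  lia.
Qed.

Lemma alpha_first beta a : 1 < beta -> is_alpha beta a -> a 0%nat = gamma beta.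
Proof.
  intros Hb Ha. rewrite (alpha_qg beta a Hb Ha). unfold qg. simpl.
  destruct (gamma_spec beta Hb) as [G1 [G2 _]].
  rewrite (dceil_unique _ (Z.of_nat (gamma beta))). lia.
  rewrite <- INR_IZR_INZ. lra.
Qed.

Lemma alpha_shift beta a : 1 < beta -> is_alpha beta a -> forall n, ~ lex_lt a (shift n a).
Proof.
  intros Hb Ha n. rewrite (alpha_qg beta a Hb Ha). rewrite qg_shift.
  apply qg_mono; auto. apply qrem_range; auto; lra. lra.
Qed.

Lemma bump_lt x j i : (i < j - 1)%nat -> bump x j i = x i.
Proof. intros H. unfold bump. destruct (Nat.ltb_spec i (j - 1)); [auto|lia]. Qed.

Lemma bump_eq x j : (1 <= j)%nat -> bump x j (j - 1)%nat = S (x (j - 1)%nat).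
Proof. intros H. unfold bump. destruct (Nat.ltb_spec (j-1) (j - 1)); [lia|].
  rewrite Nat.eqb_refl. auto. Qed.

Lemma bump_ge x j i : (1 <= j)%nat -> (j <= i)%nat -> bump x j i = 0%nat.
Proof. intros H1 H2. unfold bump. destruct (Nat.ltb_spec i (j - 1)); [lia|].
  destruct (Nat.eqb_spec i (j - 1)); [lia|auto]. Qed.

Lemma bump_gt x j : (1 <= j)%nat -> lex_lt x (bump x j).
Proof.
  intros H. exists (j - 1)%nat. split.
  - intros k Hk. rewrite bump_lt; auto.
  - rewrite bump_eq; auto.
Qed.

Lemma Lyn_bump x j : Lyn x -> (1 <= j)%nat -> (exists i, x (i + j)%nat <> 0%nat) -> Lyn (bump x j).
Proof.
  intros HL Hj [i0 Hi0] k.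
  destruct (Nat.eq_dec k 0) as [->|Hk0].
  { left. right. rewrite shift_0. auto. }
  destruct (le_lt_dec j k) as [Hjk|Hkj].
  { right. intros i. apply bump_ge; lia. }
  left. left.
  destruct (HL k) as [[[n [Hn Ln]]|E]|Z].
  - unfold shift in Hn, Ln.
    destruct (lt_dec (n + k) (j - 1)) as [Hnk|Hnk].
    + exists n. split.
      * intros i Hi. unfold shift. rewrite !bump_lt by lia. apply Hn; auto.
      * unfold shift. rewrite !bump_lt by lia. auto.
    + exists (j - 1 - k)%nat. split.
      * intros i Hi. unfold shift. rewrite !bump_lt by lia. apply Hn; lia.
      * unfold shift. replace (j - 1 - k + k)%nat with (j - 1)%nat by lia.
        rewrite bump_eq by lia. rewrite bump_lt by lia.
        destruct (Nat.eq_dec (j - 1 - k) n) as [En|En].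
        -- rewrite En. replace (j - 1)%nat with (n + k)%nat by lia. lia.
        -- rewrite (Hn (j - 1 - k)%nat) by lia. replace (j - 1 - k + k)%nat with (j - 1)%nat by lia. lia.
  - assert (Ex : forall i, x i = x (i + k)%nat).
    { intros i. change (x (i + k)%nat) with (shift k x i). rewrite <- E. auto. }
    exists (j - 1 - k)%nat. split.
    + intros i Hi. unfold shift. rewrite !bump_lt by lia. auto.
    + unfold shift. replace (j - 1 - k + k)%nat with (j - 1)%nat by lia.
      rewrite bump_eq by lia. rewrite bump_lt by lia. rewrite Ex.
      replace (j - 1 - k + k)%nat with (j - 1)%nat by lia. lia.
  - exfalso. apply Hi0. specialize (Z (i0 + j - k)%nat). replace (i0 + j - k + k)%nat with (i0 + j)%nat in Z by lia. auto.
Qed.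

Lemma proc_step beta a x : 1 < beta -> is_alpha beta a ->
  bnd (gamma beta) x -> lex_lt x a -> ~ Sigma beta a x ->
  exists j, (1 <= j)%nat /\ lex_le a (shift j x) /\ (forall k, (k < j)%nat -> ~ lex_le a (shift k x)) /\
    bnd (gamma beta) (bump x j) /\ lex_lt (bump x j) a /\ rstep beta a x (bump x j).
Proof.
  intros Hb Ha Hx Hxa HS.
  destruct (alpha_facts beta a Ha) as [Ab [Anz A1]].
  assert (A0 := alpha_first beta a Hb Ha).
  assert (AS := alpha_shift beta a Hb Ha).
  assert (Ex : exists k, lex_le a (shift k x)).
  { apply NNPP. intros C. apply HS. split; auto. intros k. apply not_le_lt. intro. apply C. eauto. }
  destruct (exists_min _ Ex) as [j [Hj Hmin]].
  assert (Hj1 : (1 <= j)%nat).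
  { destruct j; [|lia]. exfalso. rewrite shift_0 in Hj. apply (lex_lt_not_le x a Hxa Hj). }
  assert (Hbd : bnd (gamma beta) (bump x j)).
  { intros i. destruct (lt_eq_lt_dec i (j - 1)) as [[Hi|Hi]|Hi].
    - rewrite bump_lt; auto.
    - subst i. rewrite bump_eq by auto.
      destruct (Nat.eq_dec (x (j - 1)%nat) (gamma beta)) as [E|E]; [|specialize (Hx (j-1)%nat); lia].
      exfalso. assert (L := not_le_lt _ _ (Hmin (j - 1)%nat ltac:(lia))).
      destruct L as [p [Hp Lp]]. unfold shift in Hp, Lp.
      destruct p.
      + simpl in Lp. lia.
      + apply (AS 1%nat). apply (lex_le_lt_trans _ (shift j x)); auto.
        exists p. split.
        * intros i Hi. unfold shift. specialize (Hp (S i) ltac:(lia)).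
          replace (S i + (j - 1))%nat with (i + j)%nat in Hp by lia.
          replace (i + 1)%nat with (S i) by lia. auto.
        * unfold shift. replace (S p + (j - 1))%nat with (p + j)%nat in Lp by lia.
          replace (p + 1)%nat with (S p) by lia. auto.
    - rewrite bump_ge by lia. lia. }
  exists j. split; auto. split; auto. split; auto. split; auto. split.
  - destruct Hxa as [p [Hp Lp]].
    destruct (lt_eq_lt_dec p (j - 1)) as [[Hpj|Hpj]|Hpj].
    + exists p. split. intros i Hi. rewrite bump_lt by lia. auto. rewrite bump_lt by lia. auto.
    + subst p. destruct (Nat.eq_dec (S (x (j - 1)%nat)) (a (j - 1)%nat)) as [E|E].
      * destruct (Anz j) as [i1 [Hi1 Ai1]].
        destruct (exists_min (fun i => (j <= i)%nat /\ a i <> 0%nat)) as [i0 [[Hi0 Ai0] Hm0]]; eauto.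
        exists i0. split.
        -- intros i Hi. destruct (lt_eq_lt_dec i (j - 1)) as [[H|H]|H].
           ++ rewrite bump_lt; auto.
           ++ subst. rewrite bump_eq; auto.
           ++ rewrite bump_ge by lia. apply NNPP. intro. apply (Hm0 i Hi). split; [lia|auto].
        -- rewrite bump_ge by lia. lia.
      * exists (j - 1)%nat. split. intros i Hi. rewrite bump_lt; auto. rewrite bump_eq; auto. lia.
    + exfalso. apply (AS j). apply (lex_le_lt_trans _ (shift j x)); auto.
      exists (p - j)%nat. split.
      * intros i Hi. unfold shift. apply Hp. lia.
      * unfold shift. replace (p - j + j)%nat with p by lia. auto.
  - split; auto. exists j. auto.
Qed.

Lemma proc_build beta a b : 1 < beta -> is_alpha beta a ->
  forall N x, bnd (gamma beta) x -> lex_lt x a -> (forall i, (N <= i)%nat -> x i = 0%nat) ->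
  Lyn x -> lex_lt b x ->
  exists y, rproc beta a x y /\ Sigma beta a y /\ Lyn y /\ lex_lt b y.
Proof.
  intros Hb Ha N. induction N as [N IH] using (well_founded_induction lt_wf).
  intros x Hx Hxa HN HL Hbx.
  destruct (alpha_facts beta a Ha) as [Ab [Anz A1]].
  destruct (classic (Sigma beta a x)) as [HS|HS].
  { exists x. split. apply rproc_done; auto. auto. }
  destruct (proc_step beta a x Hb Ha Hx Hxa HS) as [j [Hj1 [Hj [Hmin [Hbd [Hlt Hst]]]]]].
  assert (Hnz : exists i, x (i + j)%nat <> 0%nat).
  { apply NNPP. intro C. apply (not_le_zero a (shift j x)); auto.
    destruct (Anz 0%nat) as [n [_ Hn]]. eauto.
    intros i. unfold shift. apply NNPP. intro. apply C. eauto. }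
  assert (HjN : (j < N)%nat).
  { destruct (lt_dec j N) as [|C]; auto. exfalso. destruct Hnz as [i Hi]. apply Hi. apply HN. lia. }
  destruct (IH j HjN (bump x j)) as [y [Hy1 Hy2]]; auto.
  - intros i Hi. apply bump_ge; lia.
  - apply Lyn_bump; auto.
  - eapply lex_lt_trans; eauto. apply bump_gt; auto.
  - exists y. split; auto. eapply rproc_step; eauto.
Qed.

Lemma proc_build_gen beta a b x : 1 < beta -> is_alpha beta a ->
  bnd (gamma beta) x -> lex_lt x a -> ~ Sigma beta a x -> Lyn x -> lex_lt b x ->
  exists y, rproc beta a x y /\ Sigma beta a y /\ Lyn y /\ lex_lt b y.
Proof.
  intros Hb Ha Hx Hxa HS HL Hbx.
  destruct (alpha_facts beta a Ha) as [Ab [Anz A1]].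
  destruct (proc_step beta a x Hb Ha Hx Hxa HS) as [j [Hj1 [Hj [Hmin [Hbd [Hlt Hst]]]]]].
  assert (Hnz : exists i, x (i + j)%nat <> 0%nat).
  { apply NNPP. intro C. apply (not_le_zero a (shift j x)); auto.
    destruct (Anz 0%nat) as [n [_ Hn]]. eauto.
    intros i. unfold shift. apply NNPP. intro. apply C. eauto. }
  destruct (proc_build beta a b Hb Ha j (bump x j)) as [y [Hy1 Hy2]]; auto.
  - intros i Hi. apply bump_ge; lia.
  - apply Lyn_bump; auto.
  - eapply lex_lt_trans; eauto. apply bump_gt; auto.
  - exists y. split; auto. eapply rproc_step; eauto.
Qed.

Lemma E_Ubif beta x : Eset beta x -> Ubif beta x.
Proof.
  intros [[H0 H1] HE]. split. lra. right; right. split. lra.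
  intros d Hd. set (t' := x + Rmin d (1 - x) / 2).
  assert (Hm1 : 0 < Rmin d (1 - x)) by (apply Rmin_pos; lra).
  assert (Hm2 : Rmin d (1 - x) <= d) by apply Rmin_l.
  assert (Hm3 : Rmin d (1 - x) <= 1 - x) by apply Rmin_r.
  exists t'. unfold t'. split. lra. split. rewrite Rabs_pos_eq; lra.
  intros H. assert (Kx : Kset beta x x). { right; right. split. lra. split. lra. auto. }
  apply H in Kx. destruct Kx as [[E _]|[[E _]|[_ [_ K]]]]; try lra.
  apply (K 0%nat). simpl. lra.
Qed.

Lemma Ubif_0 beta : Ubif beta 0.
Proof. split. lra. left. auto. Qed.

Lemma inv_pow_T beta q : 1 < beta -> (1 <= q)%nat -> Tb beta (/ beta ^ S q) = / beta ^ q.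
Proof.
  intros Hb Hq. unfold Tb. assert (0 < beta ^ q) by (apply pow_pos'; auto).
  replace (beta * / beta ^ S q) with (/ beta ^ q) by (simpl; field; lra).
  assert (/ beta ^ q < 1).
  { destruct q; [lia|]. simpl. rewrite Rinv_mult.
    assert (1 <= beta ^ q) by (apply pow_R1_Rle; lra).
    assert (/ beta ^ q <= 1). { rewrite <- Rinv_1. apply Rinv_le_contravar; lra. }
    assert (/ beta < 1) by (apply Rinv_lt_1; auto).
    assert (0 < / beta ^ q) by (apply Rinv_0_lt_compat; lra).
    nra. }
  rewrite (flr_unique 0). simpl. ring. simpl. split. left; apply Rinv_0_lt_compat; auto. lra.
Qed.

Lemma inv_pow_iter beta p : 1 < beta -> (1 <= p)%nat ->
  forall k, Nat.iter k (Tb beta) (/ beta ^ (k + p)) = / beta ^ p.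
Proof.
  intros Hb Hp k. induction k. simpl. auto.
  rewrite Nat.iter_succ_r. simpl (S k + p)%nat. rewrite inv_pow_T by (auto; lia). auto.
Qed.

Lemma inv_pow_E beta p : 1 < beta -> (1 <= p)%nat -> Eset beta (/ beta ^ p).
Proof.
  intros Hb Hp. assert (Hp0 : 0 < beta ^ p) by (apply pow_pos'; auto).
  assert (Hp1 : 1 < beta ^ p).
  { destruct p; [lia|]. simpl. assert (1 <= beta ^ p) by (apply pow_R1_Rle; lra). nra. }
  split. split. apply Rinv_0_lt_compat; auto. apply Rinv_lt_1; auto.
  intros k. destruct (le_lt_dec p k) as [Hk|Hk].
  - assert (Z : Nat.iter p (Tb beta) (/ beta ^ p) = 0).
    { destruct p as [|q]; [lia|].
      change (Nat.iter (S q) (Tb beta) (/ beta ^ S q)) with (Tb beta (Nat.iter q (Tb beta) (/ beta ^ S q))).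
      assert (E : Nat.iter q (Tb beta) (/ beta ^ (q + 1)) = / beta ^ 1) by (apply inv_pow_iter; auto).
      replace (q + 1)%nat with (S q) in E by lia. rewrite E.
      unfold Tb. replace (beta * / beta ^ 1) with (IZR 1) by (simpl; field; lra).
      rewrite flr_IZR. simpl. ring. }
    rewrite (iter_zero_after beta p k) by auto. lra.
  - replace (/ beta ^ p) with (/ beta ^ (k + (p - k))) at 2 by (f_equal; f_equal; lia).
    rewrite inv_pow_iter by (auto; lia).
    assert (beta ^ (p - k) <= beta ^ p) by (apply Rle_pow; lia || lra).
    assert (0 < beta ^ (p - k)) by (apply pow_pos'; auto).
    assert (/ beta ^ p <= / beta ^ (p - k)) by (apply Rinv_le_contravar; lra). lra.
Qed.

Lemma iter_left beta : 1 < beta -> forall n r,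
  (forall i, (1 <= i <= n)%nat -> Nat.iter i (Tb beta) r <> 0) ->
  exists eta, 0 < eta /\ forall u, r - eta < u <= r ->
    Nat.iter n (Tb beta) u = Nat.iter n (Tb beta) r - beta ^ n * (r - u).
Proof.
  intros Hb n. induction n; intros r Hr.
  - exists 1. split. lra. intros u Hu. simpl. ring.
  - assert (T1 : Tb beta r <> 0) by (apply (Hr 1%nat); lia).
    destruct (IHn (Tb beta r)) as [e2 [He2 H2]].
    { intros i Hi. rewrite <- Nat.iter_succ_r. apply Hr. lia. }
    assert (Tr := Tb_range beta r).
    exists (Rmin (Tb beta r / beta) (e2 / beta)). split.
    { apply Rmin_pos; apply Rdiv_lt_0_compat; lra. }
    intros u Hu.
    assert (Hm1 := Rmin_l (Tb beta r / beta) (e2 / beta)).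
    assert (Hm2 := Rmin_r (Tb beta r / beta) (e2 / beta)).
    assert (Hd1 : beta * (r - u) < Tb beta r).
    { apply (Rmult_lt_reg_r (/ beta)). apply Rinv_0_lt_compat; lra.
      replace (beta * (r - u) * / beta) with (r - u) by (field; lra). unfold Rdiv in Hm1. lra. }
    assert (Hd2 : beta * (r - u) < e2).
    { apply (Rmult_lt_reg_r (/ beta)). apply Rinv_0_lt_compat; lra.
      replace (beta * (r - u) * / beta) with (r - u) by (field; lra). unfold Rdiv in Hm2. lra. }
    assert (TU : Tb beta u = Tb beta r - beta * (r - u)).
    { unfold Tb at 1. rewrite (flr_unique (flr (beta * r))).
      - unfold Tb. ring.
      - assert (E := Tb_eq beta r). split; nra. }
    rewrite !Nat.iter_succ_r. rewrite TU. rewrite H2.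
    + simpl. ring.
    + split; nra.
Qed.

Lemma argmin_nat (g : nat -> R) : forall N, exists n, (n <= N)%nat /\
  (forall k, (k <= N)%nat -> g n <= g k) /\ (forall k, (k < n)%nat -> g n < g k).
Proof.
  induction N.
  - exists 0%nat. split. lia. split. intros k Hk. replace k with 0%nat by lia. lra. intros; lia.
  - destruct IHN as [n [Hn [H1 H2]]].
    destruct (Rlt_dec (g (S N)) (g n)) as [L|L].
    + exists (S N). split. lia. split.
      * intros k Hk. destruct (Nat.eq_dec k (S N)). subst; lra. specialize (H1 k ltac:(lia)). lra.
      * intros k Hk. specialize (H1 k ltac:(lia)). lra.
    + exists n. split. lia. split; auto.
      intros k Hk. destruct (Nat.eq_dec k (S N)). subst; lra. apply H1; lia.
Qed.

Lemma E_geq beta r k : Eset beta r -> Nat.iter k (Tb beta) r <> 0 -> r <= Nat.iter k (Tb beta) r.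
Proof.
  intros [Hr HE] Hk. assert (0 <= Nat.iter k (Tb beta) r) by (apply iter_range; lra).
  specialize (HE k). destruct (Rle_dec r (Nat.iter k (Tb beta) r)); auto. exfalso. apply HE. lra.
Qed.

Lemma z_construct beta r : 1 < beta -> Eset beta r -> (forall n, Nat.iter n (Tb beta) r <> 0) ->
  forall eps, 0 < eps -> exists z, Eset beta z /\ r < z < r + eps.
Proof.
  intros Hb Hr Hnz eps He.
  assert (Hr1 := proj1 Hr).
  set (g := fun n => (1 - Nat.iter n (Tb beta) r) / beta ^ n).
  assert (Gpos : forall n, 0 < g n).
  { intros n. unfold g. apply Rdiv_lt_0_compat. destruct (iter_range beta n r); lra. apply pow_pos'; auto. }
  destruct (small_pow beta Hb (Rmin eps (1 - r))) as [N HN]. { apply Rmin_pos; lra. }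
  assert (HN1 := Rmin_l eps (1 - r)). assert (HN2 := Rmin_r eps (1 - r)).
  assert (GN : g N <= / beta ^ N).
  { unfold g. unfold Rdiv. rewrite <- (Rmult_1_l (/ beta ^ N)) at 2.
    apply Rmult_le_compat_r. left; apply Rinv_0_lt_compat, pow_pos'; auto.
    destruct (iter_range beta N r); lra. }
  destruct (argmin_nat g N) as [n [Hn [H1 H2]]].
  assert (Gn : g n < Rmin eps (1 - r)) by (specialize (H1 N (le_n _)); lra).
  assert (G0 : g 0%nat = 1 - r) by (unfold g; simpl; field).
  assert (Hn1 : (1 <= n)%nat).
  { destruct n; [|lia]. rewrite G0 in Gn. lra. }
  set (v := fun k => Nat.iter k (Tb beta) r + beta ^ k * g n).
  assert (Vlt : forall k, (k < n)%nat -> v k < 1).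
  { intros k Hk. specialize (H2 k Hk). unfold v.
    assert (0 < beta ^ k) by (apply pow_pos'; auto).
    assert (beta ^ k * g n < beta ^ k * g k) by (apply Rmult_lt_compat_l; auto).
    unfold g at 2 in H0. replace (beta ^ k * ((1 - Nat.iter k (Tb beta) r) / beta ^ k))
      with (1 - Nat.iter k (Tb beta) r) in H0 by (field; lra). lra. }
  assert (Vge : forall k, 0 <= v k).
  { intros k. unfold v. destruct (iter_range beta k r); [lra|].
    assert (0 < beta ^ k) by (apply pow_pos'; auto). specialize (Gpos n). nra. }
  assert (Vstep : forall k, beta * v k = IZR (flr (beta * Nat.iter k (Tb beta) r)) + v (S k)).
  { intros k. unfold v. simpl. assert (E := Tb_eq beta (Nat.iter k (Tb beta) r)).
    rewrite Rmult_plus_distr_l. rewrite <- Rmult_assoc. lra. }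
  assert (Vn : v n = 1).
  { unfold v, g. field_simplify. lra. apply Rgt_not_eq, pow_pos'; auto. }
  set (z := r + g n).
  assert (Z : forall k, (k < n)%nat -> Nat.iter k (Tb beta) z = v k).
  { induction k; intros Hk.
    - simpl. unfold z, v. simpl. ring.
    - simpl. rewrite IHk by lia. unfold Tb at 1.
      rewrite (flr_unique (flr (beta * Nat.iter k (Tb beta) r))).
      + rewrite Vstep. ring.
      + rewrite Vstep. specialize (Vlt (S k) Hk). specialize (Vge (S k)). lra. }
  assert (Zn : Nat.iter n (Tb beta) z = 0).
  { destruct n as [|n']; [lia|]. simpl. rewrite Z by lia. unfold Tb.
    rewrite Vstep, Vn. rewrite <- (plus_IZR _ 1). rewrite flr_IZR. rewrite plus_IZR. ring. }
  exists z. split; [split; [split|]|].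
  - unfold z. specialize (Gpos n). lra.
  - assert (Z0 := Z 0%nat ltac:(lia)). simpl in Z0. rewrite Z0. apply Vlt. lia.
  - intros k. destruct (lt_dec k n) as [Hk|Hk].
    + rewrite Z by auto. unfold v, z.
      assert (r <= Nat.iter k (Tb beta) r) by (apply E_geq; auto).
      assert (1 <= beta ^ k) by (apply pow_R1_Rle; lra).
      specialize (Gpos n). nra.
    + rewrite (iter_zero_after beta n k) by (auto; lia). lra.
  - unfold z. specialize (Gpos n). assert (HH := Rmin_l eps (1 - r)). lra.
Qed.

Lemma greedy_zero_iter beta r k i : Nat.iter k (Tb beta) r = 0 -> greedy beta r (i + k)%nat = 0%nat.
Proof.
  intros Z. unfold greedy. rewrite Nat.iter_add, Z, iter_0, Rmult_0_r.
  replace 0 with (IZR 0) by reflexivity. rewrite flr_IZR. auto.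
Qed.

Lemma b_lex beta r : 1 < beta -> Eset beta r -> forall k,
  lex_le (greedy beta r) (shift k (greedy beta r)) \/ (forall i, greedy beta r (i + k)%nat = 0%nat).
Proof.
  intros Hb Hr k. destruct (Req_dec (Nat.iter k (Tb beta) r) 0) as [Z|NZ].
  - right. intros i. apply greedy_zero_iter; auto.
  - left. apply not_lt_le. intros L. rewrite greedy_shift in L.
    apply greedy_lex in L; auto. assert (r <= Nat.iter k (Tb beta) r) by (apply E_geq; auto). lra.
    apply iter_range. destruct Hr; lra. destruct Hr; lra.
Qed.

Lemma per_facts (b : digseq) m : (1 <= m)%nat -> b (m - 1)%nat <> 0%nat ->
  (forall i, (m <= i)%nat -> b i = 0%nat) ->
  (forall k, lex_le b (shift k b) \/ (forall i, b (i + k)%nat = 0%nat)) ->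
  Lyn (fun i => b (i mod m)%nat) /\ lex_lt b (fun i => b (i mod m)%nat).
Proof.
  intros Hm Hb0 Hbz HbL. split.
  - intros k. left.
    assert (Hm0 : m <> 0%nat) by lia.
    set (k' := (k mod m)%nat).
    assert (Hk' : (k' < m)%nat) by (apply Nat.mod_upper_bound; auto).
    assert (Sh : shift k (fun i => b (i mod m)%nat) = shift k' (fun i => b (i mod m)%nat)).
    { apply functional_extensionality. intros i. unfold shift, k'.
      rewrite Nat.add_mod_idemp_r; auto. }
    rewrite Sh. destruct (Nat.eq_dec k' 0) as [E|E].
    { right. rewrite E, shift_0. auto. }
    left. destruct (HbL k') as [[[n [Hn Ln]]|Eq]|Z].
    + unfold shift in Hn, Ln.
      assert (Hnk : (n + k' < m)%nat).
      { destruct (lt_dec (n + k') m); auto. rewrite (Hbz (n + k')%nat) in Ln by lia. lia. }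
      exists n. split.
      * intros i Hi. unfold shift. rewrite !Nat.mod_small by lia. apply Hn; auto.
      * unfold shift. rewrite !Nat.mod_small by lia. auto.
    + exfalso. apply Hb0. assert (X : b (m - 1 + k')%nat = b (m - 1)%nat).
      { change (b (m - 1 + k')%nat) with (shift k' b (m - 1)%nat). rewrite <- Eq. auto. }
      rewrite <- X. apply Hbz. lia.
    + exfalso. apply Hb0. specialize (Z (m - 1 - k')%nat).
      replace (m - 1 - k' + k')%nat with (m - 1)%nat in Z by lia. auto.
  - destruct (exists_min (fun i => b i <> 0%nat)) as [i0 [Hi0 Hmin]]; eauto.
    assert (Hi0m : (i0 < m)%nat).
    { destruct (lt_dec i0 m); auto. exfalso. apply Hi0. apply Hbz. lia. }
    exists (m + i0)%nat. split.
    + intros i Hi. destruct (lt_dec i m) as [L|L].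
      * rewrite Nat.mod_small; auto.
      * rewrite Hbz by lia. replace i with ((i - m) + 1 * m)%nat by lia.
        rewrite Nat.mod_add by lia. rewrite Nat.mod_small by lia.
        apply NNPP. intro. apply (Hmin (i - m)%nat); auto. lia.
    + rewrite Hbz by lia. replace (m + i0)%nat with (i0 + 1 * m)%nat by lia.
      rewrite Nat.mod_add by lia. rewrite Nat.mod_small by lia. lia.
Qed.

Lemma greedy_lt_pi beta x w : 1 < beta -> 0 <= x < 1 -> bnd (gamma beta) w ->
  lex_lt (greedy beta x) w -> x < piv beta w.
Proof.
  intros Hb Hx Hw [n [Hn Ln]].
  rewrite <- (pi_greedy0 beta x) by auto.
  apply (lex_pi beta (gamma beta) _ _ n); auto. apply greedy_bnd; auto.
  rewrite pi_greedy by auto. apply iter_range; auto.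
Qed.

Theorem mainTheorem4 (beta : R) (a : digseq) :
  1 < beta -> is_alpha beta a ->
  forall t, 0 <= t < 1 -> ~ Ubif beta t ->
  exists r s, beta_rational beta r /\ is_rstar beta a r s /\
    r < t < s /\ Ubif beta r /\ (Ubif beta s \/ s = 1).
Proof.
  intros Hb Ha t Ht HU.
  assert (Ht0 : 0 < t).
  { destruct (Req_dec t 0) as [E|E]. subst. exfalso. apply HU, Ubif_0. lra. }
  assert (HtE : ~ Eset beta t) by (intro E; apply HU, E_Ubif; auto).
  set (ES := fun u => Eset beta u /\ u <= t).
  destruct (small_pow beta Hb t Ht0) as [N HN].
  assert (U0 : ES (/ beta ^ S N)).
  { split. apply inv_pow_E; auto; lia.
    assert (beta ^ N <= beta ^ S N) by (simpl; assert (0 < beta ^ N) by (apply pow_pos'; auto); nra).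
    assert (0 < beta ^ N) by (apply pow_pos'; auto).
    assert (/ beta ^ S N <= / beta ^ N) by (apply Rinv_le_contravar; lra). lra. }
  destruct (completeness ES) as [r [Hru Hrl]].
  { exists t. intros u [_ Hu]. auto. }
  { eauto. }
  assert (Hrt : r <= t) by (apply Hrl; intros u [_ Hu]; auto).
  assert (Hr0 : 0 < r).
  { assert (/ beta ^ S N <= r) by (apply Hru; auto).
    assert (0 < / beta ^ S N) by (apply Rinv_0_lt_compat, pow_pos'; auto). lra. }
  assert (Near : forall eta, 0 < eta -> exists u, ES u /\ r - eta < u <= r).
  { intros eta He. apply NNPP. intros C.
    assert (is_upper_bound ES (r - eta)).
    { intros u Hu. destruct (Rle_dec u (r - eta)); auto. exfalso. apply C. exists u.
      split; auto. split. lra. apply Hru; auto. }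
    specialize (Hrl _ H). lra. }
  assert (HrE : Eset beta r).
  { split. lra. intros k Hk.
    assert (NZ : forall i, (1 <= i <= k)%nat -> Nat.iter i (Tb beta) r <> 0).
    { intros i Hi Z. rewrite (iter_zero_after beta i k) in Hk by (auto; lia). lra. }
    destruct (iter_left beta Hb k r NZ) as [eta [He Heta]].
    assert (Hbk : 0 < beta ^ k) by (apply pow_pos'; auto).
    assert (Hbk1 : 1 <= beta ^ k) by (apply pow_R1_Rle; lra).
    destruct (Near (Rmin eta (Nat.iter k (Tb beta) r / beta ^ k))) as [u [[[Hu1 Hu2] Hut] Hu]].
    { apply Rmin_pos; auto. apply Rdiv_lt_0_compat; lra. }
    assert (M1 := Rmin_l eta (Nat.iter k (Tb beta) r / beta ^ k)).
    assert (M2 := Rmin_r eta (Nat.iter k (Tb beta) r / beta ^ k)).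
    assert (Iu := Heta u ltac:(lra)).
    apply (Hu2 k). rewrite Iu.
    assert (beta ^ k * (r - u) < Nat.iter k (Tb beta) r).
    { apply (Rmult_lt_reg_r (/ beta ^ k)). apply Rinv_0_lt_compat; auto.
      replace (beta ^ k * (r - u) * / beta ^ k) with (r - u) by (field; lra). unfold Rdiv in M2. lra. }
    assert (r - u <= beta ^ k * (r - u)) by nra.
    lra. }
  assert (Hrt' : r < t).
  { destruct (Req_dec r t) as [E|E]; [|lra]. subst. contradiction. }
  assert (Hrat : exists n, Nat.iter n (Tb beta) r = 0).
  { apply NNPP. intros C.
    destruct (z_construct beta r Hb HrE) with (eps := t - r) as [z [Hz1 Hz2]].
    { intros n Z. apply C. eauto. }
    lra.
    assert (z <= r) by (apply Hru; split; auto; lra). lra. }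
  destruct (exists_min _ Hrat) as [m [Hm Hmmin]].
  assert (Hm1 : (1 <= m)%nat).
  { destruct m; [simpl in Hm; lra | lia]. }
  set (b := greedy beta r).
  assert (Hrr : 0 <= r < 1) by lra.
  assert (Bz : forall i, (m <= i)%nat -> b i = 0%nat).
  { intros i Hi. unfold b. replace i with ((i - m) + m)%nat by lia. apply greedy_zero_iter; auto. }
  assert (B0 : b (m - 1)%nat <> 0%nat).
  { unfold b, greedy. set (y := Nat.iter (m - 1) (Tb beta) r).
    assert (Hy : y <> 0) by (apply Hmmin; lia).
    assert (Hy0 : 0 <= y) by (apply iter_range; auto).
    assert (Ty : Tb beta y = 0).
    { unfold y. rewrite <- Hm. clear -Hm1. destruct m as [|m']; [lia|]. replace (S m' - 1)%nat with m' by lia. reflexivity. }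
    unfold Tb in Ty. intro Z.
    assert (F0 : flr (beta * y) = 0%Z).
    { assert (F := flr_nonneg (beta * y) ltac:(nra)). lia. }
    rewrite F0 in Ty. simpl in Ty. nra. }
  assert (Hbrat : brat_len beta r m).
  { split. lra. split. auto. split. auto. auto. }
  assert (Bbnd : bnd (gamma beta) b) by (apply greedy_bnd; auto).
  destruct (per_facts b m Hm1 B0 Bz (b_lex beta r Hb HrE)) as [PL Pb].
  set (per := fun i => b (i mod m)%nat).
  assert (Pbnd : bnd (gamma beta) per) by (intros i; apply Bbnd).
  assert (Pnz : exists i, per i <> 0%nat).
  { exists (m - 1)%nat. unfold per. rewrite Nat.mod_small by lia. auto. }
  assert (Final : forall y, Sigma beta a y -> Lyn y -> lex_lt b y ->
     Eset beta (piv beta y) /\ r < piv beta y /\ t < piv beta y).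
  { intros y Hy HL Hby.
    assert (Ynz : exists i, y i <> 0%nat).
    { destruct Hby as [n [_ Ln]]. exists n. lia. }
    assert (HE := E_of_Lyn beta a y Hb Ha Hy HL Ynz).
    assert (Hlt : r < piv beta y) by (apply greedy_lt_pi; auto; exact (proj1 Hy)).
    split; auto. split; auto.
    destruct (Rle_dec (piv beta y) t) as [L|L]; [|lra].
    assert (piv beta y <= r) by (apply Hru; split; auto). lra. }
  destruct (classic (Sigma beta a per)) as [HS|HS].
  - destruct (Final per HS PL Pb) as [F1 [F2 F3]].
    exists r, (piv beta per). split. exists m; auto. split.
    { exists m. split; [auto|]. left. split; auto. }
    split. lra. split. apply E_Ubif; auto. left. apply E_Ubif; auto.
  - assert (G0 : (b 0%nat <= gamma beta)%nat) by apply Bbnd.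
    destruct (Nat.eq_dec (b 0%nat) (gamma beta)) as [E|E].
    + exists r, 1. split. exists m; auto. split.
      { exists m. split; [auto|]. right. left. split; auto. }
      split. lra. split. apply E_Ubif; auto. right; auto.
    + assert (Pa : lex_lt per a).
      { exists 0%nat. split. intros; lia. unfold per. rewrite Nat.mod_small by lia.
        rewrite (alpha_first beta a Hb Ha). lia. }
      destruct (proc_build_gen beta a b per Hb Ha Pbnd Pa HS PL Pb) as [y [Hp [Hy [HL Hby]]]].
      destruct (Final y Hy HL Hby) as [F1 [F2 F3]].
      exists r, (piv beta y). split. exists m; auto. split.
      { exists m. split; [auto|]. right. right. split; auto. split. unfold b in E, G0. lia. exists y. auto. }
      split. lra. split. apply E_Ubif; auto. left. apply E_Ubif; auto.
Qed.
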